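(* Let $A\in\mathbb{C}^{n\times n}$ be Hermitian, $\beta>0$, $f(\mathbf{z})=\frac12\mathbf{z}^*A\mathbf{z}+\frac{\beta}{2}\sum_{k}|z_k|^4$, and let $\mathbf{z}\in\mathbb{CS}^{n-1}$ be a stationary point of $\min_{\mathbf{z}\in\mathbb{CS}^{n-1}}f(\mathbf{z})$. Then $\mathbf{z}$ is a local minimizer of $f$ on $\mathbb{CS}^{n-1}$ if and only if there exists a constant $M_{\mathbf{z}}>0$ such that $G(\mathbf{v},t)\ge 0$ for all $\mathbf{v}\in\mathcal{T}_{\mathbf{z}}\cap\mathbb{CS}^{n-1}$ and all $t\in\mathbb{R}$ with $|t|\ge M_{\mathbf{z}}$.
   Context: $\mathbb{CS}^{n-1}$ is the unit sphere of $\mathbb{C}^n$. A point $\mathbf{z}\in\mathbb{CS}^{n-1}$ is stationary if $[A+2\beta\,\mathrm{diag}(|\mathbf{z}|^2)]\mathbf{z}=2\lambda\mathbf{z}$, where $\lambda=\frac12\mathbf{z}^*A\mathbf{z}+\beta\|\mathbf{z}\|_4^4$ and $|\mathbf{z}|^2=(|z_1|^2,\dots,|z_n|^2)$. The tangent space is $\mathcal{T}_{\mathbf{z}}=\{\mathbf{v}\in\mathbb{C}^n:\mathrm{Re}(\mathbf{v}^*\mathbf{z})=0\}$. Define $H_f(\mathbf{z})[\mathbf{v}]=\mathbf{v}^*[A+2\beta\,\mathrm{diag}(|\mathbf{z}|^2)-2\lambda I]\mathbf{v}+4\beta\sum_{k}\mathrm{Re}(v_k\bar z_k)^2$, $H_3(\mathbf{v})=\beta\sum_k(|v_k|^2-|z_k|^2)\mathrm{Re}(\bar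 z_kv_k)$, and $G(\mathbf{v},t)=H_f(\mathbf{z})[\mathbf{v}]\,t^2+4H_3(\mathbf{v})\,t+2[f(\mathbf{v})-f(\mathbf{z})]$. *)

(* Defs.v *)
From HB Require Import structures.
From mathcomp Require Import all_boot all_order all_algebra.
From mathcomp Require Import complex reals.
Set Implicit Arguments. Unset Strict Implicit. Unset Printing Implicit Defensive.
Import Order.TTheory GRing.Theory Num.Theory.
Local Open Scope ring_scope.
Local Open Scope complex_scope.

Section Defs.
Variables (R : realType) (n : nat).
Local Notation C := R[i].
Local Notation vec := ('I_n -> C).

Definition csq (c : C) : R := complex.Re c ^+ 2 + complex.Im c ^+ 2.

Definition is_hermitian (A : 'M[C]_n) : Prop := forall i j, A j i = conjc (A i j).

Definition reinner (v w : vec) : R :=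
  complex.Re (\sum_(k < n) conjc (v k) * w k).

(* Re (v^* A v) (real when A is Hermitian) *)
Definition quadA (A : 'M[C]_n) (v : vec) : R :=
  complex.Re (\sum_(i < n) \sum_(j < n) conjc (v i) * A i j * v j).

Definition norm44 (z : vec) : R := \sum_(k < n) csq (z k) ^+ 2.

Definition norm22 (z : vec) : R := \sum_(k < n) csq (z k).

Definition on_sphere (z : vec) : Prop := norm22 z = 1.

Definition fobj (A : 'M[C]_n) (beta : R) (z : vec) : R :=
  quadA A z / 2 + beta / 2 * norm44 z.

Definition lam (A : 'M[C]_n) (beta : R) (z : vec) : R :=
  quadA A z / 2 + beta * norm44 z.

Definition stationary (A : 'M[C]_n) (beta : R) (z : vec) : Prop :=
  on_sphere z /\
  forall i, \sum_(j < n) A i j * z j + (2 * beta * csq (z i))%:C * z i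
            = (2 * lam A beta z)%:C * z i.

Definition tangent (z v : vec) : Prop := reinner v z = 0.

Definition Hf (A : 'M[C]_n) (beta : R) (z v : vec) : R :=
  quadA A v + \sum_(k < n) (2 * beta * csq (z k) - 2 * lam A beta z) * csq (v k)
  + 4 * beta * \sum_(k < n) complex.Re (v k * conjc (z k)) ^+ 2.

Definition H3 (beta : R) (z v : vec) : R :=
  beta * \sum_(k < n) (csq (v k) - csq (z k)) * complex.Re (conjc (z k) * v k).

Definition Gfun (A : 'M[C]_n) (beta : R) (z v : vec) (t : R) : R :=
  Hf A beta z v * t ^+ 2 + 4 * H3 beta z v * t + 2 * (fobj A beta v - fobj A beta z).

Definition dist (w z : vec) : R := Num.sqrt (\sum_(k < n) csq (w k - z k)).

Definition local_min_sphere (A : 'M[C]_n) (beta : R) (z : vec) : Prop :=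
  on_sphere z /\
  exists eps : R, 0 < eps /\
    forall w : vec, on_sphere w -> dist w z < eps -> fobj A beta z <= fobj A beta w.
End Defs.

(* Main.v *)
Require Import Defs.
From HB Require Import structures.
From mathcomp Require Import all_boot all_order all_algebra.
From mathcomp Require Import complex reals ring lra.
Import Order.TTheory GRing.Theory Num.Theory.
Local Open Scope ring_scope.
Local Open Scope complex_scope.
Notation RE := complex.Re.
Notation IM := complex.Im.
Section S.
Variable R : realType.
Local Notation C := R[i].
Lemma ReM (x y : C) : RE (x*y) = RE x * RE y - IM x * IM y.
Proof. by case: x => a b; case: y => c d. Qed.
Lemma ImM (x y : C) : IM (x*y) = RE x * IM y + IM x * RE y.
Proof. by case: x => a b; case: y => c d. Qed.
Lemma ReD (x y : C) : RE (x+y) = RE x + RE y.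
Proof. by case: x => a b; case: y => c d. Qed.
Lemma ImD (x y : C) : IM (x+y) = IM x + IM y.
Proof. by case: x => a b; case: y => c d. Qed.
Lemma ReJ (x : C) : RE (conjc x) = RE x. Proof. by case: x. Qed.
Lemma ImJ (x : C) : IM (conjc x) = - IM x. Proof. by case: x. Qed.
Lemma ReC (a : R) : RE (a%:C) = a. Proof. by []. Qed.
Lemma ImC (a : R) : IM (a%:C) = 0. Proof. by []. Qed.
Lemma ReCM (a : R) (w : C) : RE (a%:C * w) = a * RE w.
Proof. by rewrite ReM ReC ImC mul0r subr0. Qed.
Lemma rr_sym (x y : C) : RE (conjc x * y) = RE (conjc y * x).
Proof. rewrite !ReM !ReJ !ImJ. ring. Qed.
Lemma csq_lc a g (x y : C) : 
  csq (a%:C * x + g%:C * y) = a^+2 * csq x + 2*a*g * RE (conjc x * y) + g^+2 * csq y.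
Proof. rewrite /csq !ReD !ImD !ReM !ImM ReJ ImJ !ReC !ImC. ring. Qed.
Lemma conjCr (a : R) : conjc (a%:C) = a%:C :> C.
Proof. by apply/eqP; rewrite eq_complex /= oppr0 !eqxx. Qed.
Lemma cjD (x y : C) : conjc (x + y) = conjc x + conjc y.
Proof. by case: x => a b; case: y => c d; apply/eqP; rewrite eq_complex /= opprD !eqxx. Qed.
Lemma cjM (x y : C) : conjc (x * y) = conjc x * conjc y.
Proof. case: x => a b; case: y => c d; apply/eqP; rewrite eq_complex /=. apply/andP; split; apply/eqP; ring. Qed.
Lemma cjK (x : C) : conjc (conjc x) = x.
Proof. by case: x => a b; rewrite /= opprK. Qed.
Lemma ReSum (I : finType) (F : I -> C) : RE (\sum_i F i) = \sum_i RE (F i).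
Proof. exact: raddf_sum. Qed.

Variable n : nat.
Definition lc (a g : R) (x y : 'I_n -> C) : 'I_n -> C := fun k => a%:C * x k + g%:C * y k.

Lemma reinnerE (x y : 'I_n -> C) : reinner x y = \sum_k RE (conjc (x k) * y k).
Proof. by rewrite /reinner ReSum. Qed.

Lemma norm22_lc a g x y : norm22 (lc a g x y) =
  a^+2 * norm22 x + 2*a*g * reinner x y + g^+2 * norm22 y.
Proof.
rewrite /norm22 /lc reinnerE.
under eq_bigr do rewrite csq_lc.
by rewrite !mulr_sumr -!big_split.
Qed.

Lemma reinner_lc a g x y w : reinner (lc a g x y) w = a * reinner x w + g * reinner y w.
Proof.
rewrite !reinnerE /lc !mulr_sumr -big_split /=; apply: eq_bigr => k _.
by rewrite cjD !cjM !conjCr mulrDl ReD -!mulrA !ReCM.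
Qed.

Lemma norm44_lc a g x y : norm44 (lc a g x y) =
  a^+4 * (\sum_k csq (x k) ^+ 2)
  + 4 * a^+3 * g * (\sum_k csq (x k) * RE (conjc (x k) * y k))
  + a^+2 * g^+2 * (4 * \sum_k RE (conjc (x k) * y k) ^+ 2 + 2 * \sum_k csq (x k) * csq (y k))
  + 4 * a * g^+3 * (\sum_k RE (conjc (x k) * y k) * csq (y k))
  + g^+4 * (\sum_k csq (y k) ^+ 2).
Proof.
rewrite /norm44 /lc.
under eq_bigr do rewrite csq_lc.
rewrite (eq_bigr (fun k => a^+4 * csq (x k) ^+ 2
  + 4 * a^+3 * g * (csq (x k) * RE (conjc (x k) * y k))
  + (a^+2 * g^+2 * 4) * RE (conjc (x k) * y k) ^+ 2
  + (a^+2 * g^+2 * 2) * (csq (x k) * csq (y k))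
  + 4 * a * g^+3 * (RE (conjc (x k) * y k) * csq (y k))
  + g^+4 * csq (y k) ^+ 2)); last by move=> k _; ring.
rewrite !big_split /= -!mulr_sumr; ring.
Qed.

Variable A : 'M[C]_n.
Definition Bf (x y : 'I_n -> C) : R := RE (\sum_i \sum_j conjc (x i) * A i j * y j).
Lemma BfE x y : Bf x y = \sum_i \sum_j RE (conjc (x i) * A i j * y j).
Proof. rewrite /Bf ReSum; apply: eq_bigr => i _; exact: ReSum. Qed.

Lemma Bsym x y : is_hermitian A -> Bf x y = Bf y x.
Proof.
move=> hA; rewrite !BfE exchange_big /=; apply: eq_bigr => i _; apply: eq_bigr => j _.
rewrite -ReJ !cjM cjK hA cjK; congr RE; ring.
Qed.

Lemma quadA_lc a g x y : is_hermitian A -> quadA A (lc a g x y) =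
  a^+2 * Bf x x + 2*a*g * Bf x y + g^+2 * Bf y y.
Proof.
move=> hA.
have -> : quadA A (lc a g x y) = \sum_i \sum_j (a^+2 * RE (conjc (x i) * A i j * x j)
   + a*g * RE (conjc (x i) * A i j * y j) + a*g * RE (conjc (y i) * A i j * x j)
   + g^+2 * RE (conjc (y i) * A i j * y j)).
  rewrite /quadA ReSum; apply: eq_bigr => i _; rewrite ReSum; apply: eq_bigr => j _.
  rewrite -!ReCM -!ReD; congr RE.
  rewrite /lc cjD !cjM !conjCr !rmorphXn !rmorphM /=; ring.
under eq_bigr do rewrite !big_split /= -!mulr_sumr.
rewrite !big_split /= -!mulr_sumr -!BfE (Bsym y x hA); ring.
Qed.
Variables (beta : R) (z : 'I_n -> C).

Lemma stat_b v : stationary A beta z -> reinner v z = 0 ->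
  Bf v z = - (2 * beta) * \sum_k csq (z k) * RE (conjc (z k) * v k).
Proof.
case=> _ hs ht.
have -> : Bf v z = \sum_i (2 * lam A beta z - 2 * beta * csq (z i)) * RE (conjc (v i) * z i).
  rewrite /Bf ReSum; apply: eq_bigr => i _.
  have Hi : \sum_j A i j * z j = (2 * lam A beta z)%:C * z i - (2 * beta * csq (z i))%:C * z i.
    by rewrite -(hs i) addrK.
  have -> : \sum_j conjc (v i) * A i j * z j = conjc (v i) * \sum_j A i j * z j.
    by rewrite mulr_sumr; apply: eq_bigr => j _; rewrite mulrA.
  rewrite Hi -ReCM rmorphB /=; congr RE; ring.
rewrite reinnerE in ht.
under eq_bigr do rewrite mulrBl.
rewrite sumrB -!mulr_sumr ht mulr0 sub0r mulNr; congr (- _); rewrite mulr_sumr.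
by apply: eq_bigr => k _; rewrite rr_sym mulrA.
Qed.

Lemma key t k v : is_hermitian A -> stationary A beta z -> reinner v z = 0 ->
  norm22 v = 1 -> (t*k)^+2 + k^+2 = 1 ->
  2 * (fobj A beta (lc (t*k) k z v) - fobj A beta z) = k^+4 * Gfun A beta z v t.
Proof.
move=> hA hs ht hv h.
have hb := stat_b v hs ht.
have E1 : \sum_k (2 * beta * csq (z k) - 2 * lam A beta z) * csq (v k) =
   2 * beta * (\sum_k csq (z k) * csq (v k)) - 2 * lam A beta z * norm22 v.
  by rewrite /norm22 !mulr_sumr -sumrB; apply: eq_bigr => k' _; ring.
have E2 : \sum_k RE (v k * conjc (z k)) ^+ 2 = \sum_k RE (conjc (z k) * v k) ^+ 2.
  by apply: eq_bigr => k' _; rewrite mulrC.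
have E3 : \sum_k (csq (v k) - csq (z k)) * RE (conjc (z k) * v k) =
   \sum_k RE (conjc (z k) * v k) * csq (v k) - \sum_k csq (z k) * RE (conjc (z k) * v k).
  by rewrite -sumrB; apply: eq_bigr => k' _; ring.
rewrite /Gfun /Hf /H3 E1 E2 E3 hv /lam /fobj quadA_lc // norm44_lc (Bsym z v hA) hb.
change (quadA A v) with (Bf v v); change (quadA A z) with (Bf z z).
rewrite /norm44.
set a := Bf z z; set c := Bf v v.
set Spp := \sum_k csq (z k) ^+ 2.
set Spr := \sum_k csq (z k) * RE (conjc (z k) * v k).
set Srr := \sum_k RE (conjc (z k) * v k) ^+ 2.
set Spm := \sum_k csq (z k) * csq (v k).
set Srm := \sum_k RE (conjc (z k) * v k) * csq (v k).
set Smm := \sum_k csq (v k) ^+ 2.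
set e := (t*k)^+2 + k^+2.
set Q := (t*k)^+2 * a + 2 * (t*k) * k * (- (2 * beta) * Spr) + k^+2 * c.
apply/eqP; rewrite -subr_eq0; apply/eqP.
have -> : forall L Rr : R, L - Rr = L - Rr by [].
transitivity ((1 - e) * (Q - (a + beta * Spp) * (1 + e))).
  by rewrite /e /Q; field.
by rewrite /e h subrr mul0r.
Qed.
End S.
Arguments lc {R n}.
Arguments Bf {R n}.

Section T.
Variables (R : realType) (n : nat).
Local Notation C := R[i].

Lemma reinner_sym (x y : 'I_n -> C) : reinner x y = reinner y x.
Proof. by rewrite !reinnerE; apply: eq_bigr => k _; rewrite rr_sym. Qed.

Lemma reinner_self (x : 'I_n -> C) : reinner x x = norm22 x.
Proof. by rewrite reinnerE /norm22; apply: eq_bigr => k _; rewrite ReM ReJ ImJ /csq; ring. Qed.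

Lemma csq_ge0 (c : C) : 0 <= csq c.
Proof. by rewrite /csq addr_ge0 // sqr_ge0. Qed.

Lemma norm22_ge0 (x : 'I_n -> C) : 0 <= norm22 x.
Proof. by apply: sumr_ge0 => k _; apply: csq_ge0. Qed.

Lemma lc_subE a g (x y : 'I_n -> C) k : lc a g x y k - x k = lc (a - 1) g x y k.
Proof. by rewrite /lc rmorphB rmorph1 /=; ring. Qed.

Lemma distE a g (z v : 'I_n -> C) : norm22 z = 1 -> reinner z v = 0 -> norm22 v = 1 ->
  dist (lc a g z v) z = Num.sqrt ((a - 1)^+2 + g^+2).
Proof.
move=> hz ht hv; rewrite /dist.
have -> : \sum_k csq (lc a g z v k - z k) = norm22 (lc (a - 1) g z v).
  by apply: eq_bigr => k _; rewrite lc_subE.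
by rewrite norm22_lc hz ht hv; congr Num.sqrt; ring.
Qed.
End T.

From Stdlib Require Import FunctionalExtensionality.

Lemma csq_eq0 (R : realType) (c : R[i]) : csq c = 0 -> c = 0.
Proof.
case: c => a b; rewrite /csq /= => h.
have ha : a = 0 by nra.
have hb' : b = 0 by nra.
by rewrite ha hb'.
Qed.

Theorem theorem2 (R : realType) (n : nat) (A : 'M[R[i]]_n) (beta : R)
  (z : 'I_n -> R[i]) :
  is_hermitian A -> 0 < beta -> stationary A beta z ->
  (local_min_sphere A beta z <->
   exists M : R, 0 < M /\
     forall (v : 'I_n -> R[i]) (t : R),
       tangent z v -> on_sphere v -> M <= `|t| -> 0 <= Gfun A beta z v t).
Proof.
move=> hA hb hs; have hz : norm22 z = 1 := hs.1.
split.
- case=> _ [eps [he hmin]].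
  exists (2 / eps); split; first by rewrite divr_gt0.
  move=> v t ht hv hM.
  have ht' : reinner z v = 0 by rewrite reinner_sym.
  have tp : 0 < `|t| by apply: lt_le_trans hM; rewrite divr_gt0.
  have tn0 : t != 0 by rewrite -normr_gt0.
  have ht2 : `|t| ^+ 2 = t ^+ 2 by rewrite real_normK // num_real.
  have dp : 0 < 1 + t ^+ 2 by rewrite ltr_pwDl // sqr_ge0.
  set d := Num.sqrt (1 + t ^+ 2).
  have d0 : 0 < d by rewrite sqrtr_gt0.
  have hd2 : d ^+ 2 = 1 + t ^+ 2 by rewrite sqr_sqrtr // ltW.
  set k := t / `|t| / d.
  have hk : (t * k) ^+ 2 + k ^+ 2 = 1.
    have -> : (t * k) ^+ 2 + k ^+ 2 = (t ^+ 2 + 1) * t ^+ 2 / (`|t| ^+ 2 * d ^+ 2).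
      rewrite /k; field; rewrite ?gt_eqF //.
    by rewrite ht2 hd2; field; rewrite (gt_eqF dp).
  have htk : 0 < t * k.
    have -> : t * k = `|t| / d.
      rewrite /k !mulrA -expr2 -ht2; field; rewrite ?gt_eqF //.
    exact: divr_gt0.
  have hw : on_sphere (lc (t * k) k z v) by rewrite /on_sphere norm22_lc hz ht' hv; lra.
  have hdist : dist (lc (t * k) k z v) z < eps.
    rewrite distE // -[X in _ < X](ger0_norm (ltW he)) -sqrtr_sqr ltr_sqrt ?exprn_gt0 //.
    have h1 : 2 <= `|t| * eps by rewrite -ler_pdivrMr.
    have h2 : 4 <= t ^+ 2 * eps ^+ 2.
      rewrite -ht2 -exprMn; have -> : 4 = 2 ^+ 2 :> R by rewrite expr2; lra.
      by rewrite lerXn2r // ?nnegrE; lra.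
    set x := t * k in hk htk *.
    have hx2 : x ^+ 2 = t ^+ 2 * k ^+ 2 by rewrite /x exprMn.
    have s1 : x <= 1 by nra.
    have s2 : (x - 1) ^+ 2 + k ^+ 2 <= 2 * k ^+ 2 by nra.
    have s3 : k ^+ 2 * t ^+ 2 <= 1 by nra.
    have p1 : 0 <= (t ^+ 2 * eps ^+ 2 - 4) * k ^+ 2 by rewrite mulr_ge0 ?subr_ge0 ?sqr_ge0.
    have p2 : 0 <= (1 - k ^+ 2 * t ^+ 2) * eps ^+ 2 by rewrite mulr_ge0 ?subr_ge0 ?sqr_ge0.
    have s4 : 4 * k ^+ 2 <= eps ^+ 2 by nra.
    have : 0 < eps ^+ 2 by rewrite exprn_gt0.
    lra.
  have hf := hmin _ hw hdist.
  have hK := @key R n A beta z t k v hA hs ht hv hk.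
  have k0 : k != 0 by apply: contraTneq htk => ->; rewrite mulr0 ltxx.
  have k4 : 0 < k ^+ 4 by rewrite exprn_even_gt0.
  rewrite -(pmulr_rge0 _ k4) -hK; lra.
- case=> M [hM hG]; split; first exact: hs.1.
  have e0 : 0 < 2 * M + 1 by lra.
  set eps := 1 / (2 * M + 1).
  have ep : 0 < eps by rewrite divr_gt0.
  have heps : eps * (2 * M + 1) = 1 by rewrite /eps; field; rewrite gt_eqF.
  exists eps; split => // w hw hd.
  set c0 := reinner w z.
  have hD : \sum_k csq (w k - z k) = 2 - 2 * c0.
    have -> : \sum_k csq (w k - z k) = norm22 (lc 1 (-1) w z).
      apply: eq_bigr => k _; rewrite /lc rmorphN rmorph1; congr csq; ring.
    rewrite norm22_lc hz; rewrite /on_sphere in hw; rewrite hw -/c0; ring.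
  have D0 : 0 <= 2 - 2 * c0 by rewrite -hD; apply: sumr_ge0 => k _; apply: csq_ge0.
  rewrite /dist hD -[X in _ < X](ger0_norm (ltW ep)) -sqrtr_sqr ltr_sqrt ?exprn_gt0 // in hd.
  have ep1 : eps < 1 by nra.
  have c0h : 1 / 2 < c0 by nra.
  set u := lc 1 (- c0) w z.
  have hu2 : norm22 u = 1 - c0 ^+ 2.
    rewrite /u norm22_lc hz; rewrite /on_sphere in hw; rewrite hw -/c0; ring.
  have hut : reinner u z = 0.
    by rewrite /u reinner_lc reinner_self hz -/c0; ring.
  have hwu : forall k, w k = lc c0 1 z u k.
    by move=> k; rewrite /u /lc rmorphN rmorph1; ring.
  have := @norm22_ge0 R n u; rewrite le_eqVlt => /orP [/eqP s0 | spos].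
    have hu0 : forall k, u k = 0.
      have : \sum_k csq (u k) = 0 := esym s0.
      move/psumr_eq0P => H k; apply: csq_eq0; apply: H => // k' _; apply: csq_ge0.
    rewrite -s0 in hu2.
    have c01 : c0 = 1 by nra.
    have -> : w = z.
      apply: functional_extensionality => k; rewrite hwu /lc hu0 c01 rmorph1; ring.
    exact: lexx.
  rewrite hu2 in spos.
  set sg := Num.sqrt (1 - c0 ^+ 2).
  have sgp : 0 < sg by rewrite sqrtr_gt0.
  have sg2 : sg ^+ 2 = 1 - c0 ^+ 2 by rewrite sqr_sqrtr // ltW.
  set v := lc 0 sg^-1 z u.
  have hvt : reinner v z = 0 by rewrite /v reinner_lc hut; ring.
  have hv1 : norm22 v = 1.
    rewrite /v norm22_lc reinner_sym hut hu2 -sg2; field; rewrite gt_eqF //.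
  set t := c0 / sg.
  have htk : t * sg = c0 by rewrite /t; field; rewrite gt_eqF //.
  have hk : (t * sg) ^+ 2 + sg ^+ 2 = 1 by rewrite htk sg2; ring.
  have hw2 : w = lc (t * sg) sg z v.
    apply: functional_extensionality => k; rewrite hwu htk /lc /v /lc.
    by rewrite rmorph0 rmorph1 mul0r add0r mulrA -rmorphM mulfV ?gt_eqF // rmorph1.
  have q1 : sg ^+ 2 < eps ^+ 2 by nra.
  have q2 : sg < eps by nra.
  have q3 : M * sg <= M * eps by rewrite ler_wpM2l // ltW.
  have hMt : M <= `|t|.
    rewrite gtr0_norm; last by rewrite /t divr_gt0 //; lra.
    rewrite /t ler_pdivlMr //; nra.
  have hg := hG v t hvt hv1 hMt.
  have hK := @key R n A beta z t sg v hA hs hvt hv1 hk.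
  have s4 : 0 < sg ^+ 4 by rewrite exprn_gt0.
  have : 0 <= sg ^+ 4 * Gfun A beta z v t by rewrite mulr_ge0 // ltW.
  rewrite -hK hw2; lra.
Qed.
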